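(* Let $n\ge 3$. Consider the board with two bounded cells formed by a cycle graph $C_n$ embedded in the plane together with one additional vertex $a$ inside the cycle that is joined by edges to exactly two adjacent vertices $b$ and $c$ of the cycle (and to no other vertices); the cells are the triangle $abc$ and a cell with $n+1$ boundary edges. In the Game of Cycles on this board, if $n$ is odd then Player~1 has a winning strategy, and if $n$ is even then Player~2 has a winning strategy.
   Context: The Game of Cycles. A board is a simple connected planar graph embedded in the plane, together with its bounded cells. Two players alternate turns; on a turn a player marks one unmarked edge with an arrow pointing along the edge in one of its two directions. Each edge receives at most one arrow, and arrows have the same effect regardless of who placed them. Moves must obey the sink-source rule: no move may create a sink (a vertex all of whose incident edges are marked with arrows pointing toward it) or a source (a vertex all of whose incident edges are marked with arrows pointing away from it). A player who has a legal move must make one. A cycle cell is a bounded cell all of whose boundary edges are marked with arrows all cycling in the same direction around that cell. The first player to create a cycle cell wins; if play ends (no legal move remains) without a cycle cell, the player who made the last move wins. A winning strategy guarantees a win regardless of the opponent's moves. *)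

(* Defs.v *)
From mathcomp Require Import all_boot.
Set Implicit Arguments. Unset Strict Implicit. Unset Printing Implicit Defensive.

Section Board.
Variable n : nat.

(* Vertices: [Some i] is cycle vertex i (0 <= i < n), [None] is the extra vertex a.
   b is cycle vertex 0, c is cycle vertex 1 (adjacent on the cycle). *)
Definition vertex := option 'I_n.

(* Edges: [inl i] is the cycle edge {i, i+1 mod n};
          [inr true] is the edge {a, b} = {a, 0};
          [inr false] is the edge {a, c} = {a, 1}. *)
Definition edge := ('I_n + bool)%type.

(* Each edge gets a reference orientation tail -> head:
   cycle edge i : i -> (i+1 mod n);  {a,b} : a -> 0;  {a,c} : a -> 1. *)
Definition is_tail (e : edge) (v : vertex) : bool :=
  match e, v with
  | inl i, Some j => val j == val i
  | inl _, None => false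
  | inr _, None => true
  | inr _, Some _ => false
  end.

Definition is_head (e : edge) (v : vertex) : bool :=
  match e, v with
  | inl i, Some j => val j == (val i).+1 %% n
  | inl _, None => false
  | inr true, Some j => val j == 0
  | inr false, Some j => val j == 1
  | inr _, None => false
  end.

Definition incident (e : edge) (v : vertex) : bool := is_tail e v || is_head e v.

(* A position: each edge is unmarked ([None]) or carries an arrow;
   [Some true] = arrow tail -> head, [Some false] = arrow head -> tail. *)
Definition position := edge -> option bool.

Definition empty_pos : position := fun _ => None.

Definition upd (p : position) (e : edge) (d : bool) : position :=
  fun x => if x == e then Some d else p x.

Definition points_in (p : position) (e : edge) (v : vertex) : Prop :=
  (p e = Some true /\ is_head e v) \/ (p e = Some false /\ is_tail e v).

Definition points_out (p : position) (e : edge) (v : vertex) : Prop :=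
  (p e = Some true /\ is_tail e v) \/ (p e = Some false /\ is_head e v).

Definition is_sink (p : position) (v : vertex) : Prop :=
  forall e, incident e v -> points_in p e v.

Definition is_source (p : position) (v : vertex) : Prop :=
  forall e, incident e v -> points_out p e v.

Definition legal (p : position) (e : edge) (d : bool) : Prop :=
  p e = None /\
  (forall v, ~ is_sink (upd p e d) v) /\ (forall v, ~ is_source (upd p e d) v).

(* A bounded cell is given by its boundary edges together with the direction
   (w.r.t. the reference orientation) in which a fixed traversal of the
   boundary runs through each edge: [Some true] = along, [Some false] = against,
   [None] = edge not on the boundary. *)
Definition cell := edge -> option bool.

(* Triangle a b c, traversed a -> 0 -> 1 -> a. *)
Definition tri_cell : cell := fun e =>
  match e with
  | inl i => if val i == 0 then Some true else None
  | inr true => Some true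
  | inr false => Some false
  end.

(* The (n+1)-gon cell, traversed 1 -> 2 -> ... -> n-1 -> 0 -> a -> 1. *)
Definition big_cell : cell := fun e =>
  match e with
  | inl i => if val i == 0 then None else Some true
  | inr true => Some false
  | inr false => Some true
  end.

Definition cycle_cell (p : position) (C : cell) : Prop :=
  exists s : bool, forall e d, C e = Some d -> p e = Some (d == s).

Definition has_cycle_cell (p : position) : Prop :=
  cycle_cell p tri_cell \/ cycle_cell p big_cell.

(* [wins p]: the player about to move from position p has a winning strategy:
   some legal move either creates a cycle cell, or is such that every legal
   reply of the opponent creates no cycle cell and leads to a position from
   which we again win.  (If the opponent has no legal reply, the vacuous case
   means we made the last move and win.) *)
Inductive wins : position -> Prop :=
| wins_move (p : position) (e : edge) (d : bool) :
    legal p e d ->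
    (has_cycle_cell (upd p e d) \/
     forall e' d', legal (upd p e d) e' d' ->
       ~ has_cycle_cell (upd (upd p e d) e' d') /\ wins (upd (upd p e d) e' d')) ->
    wins p.

Definition player1_wins : Prop := wins empty_pos.

Definition player2_wins : Prop :=
  forall e d, legal empty_pos e d ->
    ~ has_cycle_cell (upd empty_pos e d) /\ wins (upd empty_pos e d).

End Board.

(* Main.v *)
Require Import Defs.
From mathcomp Require Import all_boot zify.
From Stdlib Require Import Classical.
Set Implicit Arguments. Unset Strict Implicit. Unset Printing Implicit Defensive.

Lemma m_lt2 n k : 0 < n -> k < n + n -> k %% n = if k < n then k else k - n.
Proof.
move=> n0 kl; case: ifP => h; first by rewrite modn_small.
have -> : k = (k - n) + n by lia.
by rewrite modnDr modn_small; lia.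
Qed.

Ltac elim_mod :=
  repeat match goal with
  | |- context [?k %% ?n] =>
      lazymatch k with context [_ %% _] => fail | _ =>
      rewrite (@m_lt2 n k); [ | lia | lia]; case: ifP => ? end
  end.

Ltac add_ords := repeat match goal with
  | x : 'I_?k |- _ => lazymatch goal with
       | _ : is_true (nat_of_ord x < k) |- _ => fail
       | _ => have := ltn_ord x; intro end end.

Ltac fix_val := repeat match goal with H : ?T |- _ =>
  lazymatch T with context [isSub.val_subdef] => progress (simpl in H) end end.

Ltac arith := add_ords; fix_val; simpl; elim_mod; lia.

Section Game.
Variable n : nat.
Hypothesis hn : 2 < n.

Lemma npos : 0 < n. Proof. by apply: leq_trans hn. Qed.
Definition oo (k : nat) : 'I_n := Ordinal (ltn_pmod k npos).
Lemma val_oo k : val (oo k) = k %% n. Proof. by []. Qed.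

Definition tauE (e : edge n) : edge n :=
  match e with inl i => inl (oo (n - i)) | inr b => inr (~~ b) end.
Definition sigV (v : vertex n) : vertex n :=
  match v with Some j => Some (oo (n.+1 - j)) | None => None end.
Definition tmap (e : edge n) (x : option bool) :=
  match e with inl _ => x | inr _ => omap negb x end.
Definition tdir (e : edge n) (d : bool) :=
  match e with inl _ => d | inr _ => ~~ d end.
Definition symat (p : position n) f := p (tauE f) = tmap f (p f).

Lemma oo_val (i : 'I_n) : oo i = i.
Proof. apply: val_inj => /=; by rewrite modn_small. Qed.

Lemma tauE_inv (e : edge n) : tauE (tauE e) = e.
Proof.
case: e => [i|b] /=; last by rewrite negbK.
congr inl; apply: val_inj => /=; arith.
Qed.

Lemma sigV_inv (v : vertex n) : sigV (sigV v) = v.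
Proof.
case: v => [j|] //=; congr Some; apply: val_inj => /=; arith.
Qed.

Lemma head_tau (e : edge n) (v : vertex n) : is_head (tauE e) (sigV v) =
  if e is inl _ then is_tail e v else is_head e v.
Proof.
case: e => [i|[]]; case: v => [j|] //=; arith.
Qed.

Lemma tail_tau (e : edge n) (v : vertex n) : is_tail (tauE e) (sigV v) =
  if e is inl _ then is_head e v else is_tail e v.
Proof.
case: e => [i|[]]; case: v => [j|] //=; arith.
Qed.

Lemma inc_tau (e : edge n) (v : vertex n) : incident (tauE e) (sigV v) = incident e v.
Proof.
rewrite /incident head_tau tail_tau; case: e => //= i; by rewrite orbC.
Qed.

Lemma symat_in (p : position n) f v : symat p f ->
  (points_in p f v <-> points_out p (tauE f) (sigV v)).
Proof.
rewrite /symat /points_in /points_out head_tau tail_tau => ->.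
case: f => [i|b] /=; case: (p _) => [[]|] /=; intuition congruence.
Qed.

Lemma symat_out (p : position n) f v : symat p f ->
  (points_out p f v <-> points_in p (tauE f) (sigV v)).
Proof.
rewrite /symat /points_in /points_out head_tau tail_tau => ->.
case: f => [i|b] /=; case: (p _) => [[]|] /=; intuition congruence.
Qed.

Lemma noloop (e : edge n) (v : vertex n) : is_head e v -> is_tail e v -> False.
Proof.
case: e => [i|[]]; case: v => [j|] //=; move=> h1 h2; move: h1 h2; arith.
Qed.

Lemma in_out (p : position n) e v : points_in p e v -> points_out p e v -> False.
Proof.
rewrite /points_in /points_out.
move=> [[h1 h2]|[h1 h2]] [[h3 h4]|[h3 h4]]; try congruence; exact: (noloop h2 h4) || exact: (noloop h4 h2).
Qed.

Lemma in_inc (p : position n) e v : points_in p e v -> incident e v.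
Proof. rewrite /incident; by move=> [[_ ->]|[_ ->]]; rewrite ?orbT. Qed.
Lemma out_inc (p : position n) e v : points_out p e v -> incident e v.
Proof. rewrite /incident; by move=> [[_ ->]|[_ ->]]; rewrite ?orbT. Qed.

Definition good_vertex (p : position n) v :=
  (exists e, incident e v /\ p e = None) \/
  ((exists e, points_in p e v) /\ (exists e, points_out p e v)).

Definition nosrc (p : position n) := forall v, ~ is_sink p v /\ ~ is_source p v.

Lemma good_ok (p : position n) v : good_vertex p v -> ~ is_sink p v /\ ~ is_source p v.
Proof.
move=> [[e [he pe]]|[[e1 h1] [e2 h2]]]; split => H.
- by case: (H e he) => [[]|[]]; rewrite pe.
- by case: (H e he) => [[]|[]]; rewrite pe.
- exact: (in_out (H e2 (out_inc h2)) h2).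
- exact: (in_out h1 (H e1 (in_inc h1))).
Qed.

Lemma upd_same (p : position n) e d : upd p e d e = Some d.
Proof. by rewrite /upd eqxx. Qed.
Lemma upd_other (p : position n) e d f : f <> e -> upd p e d f = p f.
Proof. by rewrite /upd => /eqP /negbTE ->. Qed.

Lemma sink_nonincident (p : position n) e d v : ~~ incident e v ->
  (is_sink (upd p e d) v <-> is_sink p v) /\ (is_source (upd p e d) v <-> is_source p v).
Proof.
move=> ni.
have E : forall f, incident f v -> upd p e d f = p f.
  move=> f hf; apply: upd_other => fe; subst f; by rewrite hf in ni.
rewrite /is_sink /is_source /points_in /points_out; split; split => H f hf;
  move: (H f hf); by rewrite (E f hf).
Qed.

Lemma legal_nosrc (p : position n) e d : legal p e d -> nosrc (upd p e d).
Proof. move=> [_ [h1 h2]] v; by split. Qed.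

Lemma legal_local (q : position n) e d : q e = None -> nosrc q ->
  (forall v, incident e v -> good_vertex (upd q e d) v) -> legal q e d.
Proof.
move=> qe ns H; split => //.
have K : forall v, ~ is_sink (upd q e d) v /\ ~ is_source (upd q e d) v.
  move=> v; case: (boolP (incident e v)) => hv; first exact: good_ok (H v hv).
  have [[a1 _] [a2 _]] := sink_nonincident q d hv.
  case: (ns v) => n1 n2; split => h; [exact: n1 (a1 h) | exact: n2 (a2 h)].
by split => v; case: (K v).
Qed.


Lemma simple_graph (e f : edge n) (u v : vertex n) :
  incident e v -> incident e u -> incident f v -> incident f u -> u <> v -> e = f.
Proof.
rewrite /incident.
case: e => [i|b]; case: f => [k|b']; case: u => [a|]; case: v => [c|] //=;
 move=> h1 h2 h3 h4 uv.
- have ac : val a != val c by apply/eqP => /val_inj E; apply: uv; rewrite E.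
  congr inl; apply: val_inj; move: h1 h2 h3 h4 ac; arith.
- have ac : val a != val c by apply/eqP => /val_inj E; apply: uv; rewrite E.
  move: h1 h2 h3 h4 ac; case: b' => /=; arith.
- have ac : val a != val c by apply/eqP => /val_inj E; apply: uv; rewrite E.
  move: h1 h2 h3 h4 ac; case: b => /=; arith.
- have ac : val a != val c by apply/eqP => /val_inj E; apply: uv; rewrite E.
  move: h1 h2 h3 h4 ac; case: b; case: b' => //=; arith.
- move: h1 h2 h3 h4; case: b; case: b' => //=; arith.
- move: h1 h2 h3 h4; case: b; case: b' => //=; arith.
Qed.

Lemma mirror_ok (p : position n) e d v :
  let q := upd p e d in let q' := upd q (tauE e) (tdir e d) in
  nosrc q -> tauE e <> e ->
  (forall f, incident f v \/ incident f (sigV v) -> symat q' f) ->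
  ~ is_sink q' v /\ ~ is_source q' v.
Proof.
move=> q q' ns te S.
have Eq : forall f w, ~~ incident (tauE e) w -> incident f w -> q' f = q f.
  move=> f w h hf; apply: upd_other => E; subst f; by rewrite hf in h.
have Hs : forall w, ~~ incident (tauE e) w -> is_sink q' w -> False.
  move=> w h H; apply: (proj1 (ns w)) => f hf; move: (H f hf).
  by rewrite /points_in (Eq f w h hf).
have Ho : forall w, ~~ incident (tauE e) w -> is_source q' w -> False.
  move=> w h H; apply: (proj2 (ns w)) => f hf; move: (H f hf).
  by rewrite /points_out (Eq f w h hf).
have inc1 : forall f w, incident f (sigV w) = incident (tauE f) w.
  move=> f w; by rewrite -(inc_tau (tauE f) w) tauE_inv.
split => H.
- have i1 : incident (tauE e) v by apply/negPn/negP => h; exact: Hs v h H.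
  have H2 : is_source q' (sigV v).
    move=> g hg; have hf : incident (tauE g) v by rewrite -inc1.
    have := (symat_in v (S _ (or_introl hf))).1 (H _ hf); by rewrite tauE_inv.
  have i2 : incident (tauE e) (sigV v) by apply/negPn/negP => h; exact: Ho _ h H2.
  have ie1 : incident e v by rewrite -inc_tau.
  have ie2 : incident e (sigV v) by rewrite inc1.
  case: (eqVneq v (sigV v)) => E.
  + have := (symat_in v (S e (or_introl ie1))).1 (H e ie1); rewrite -E => h.
    exact: in_out (H _ i1) h.
  + apply: te; symmetry; apply: (simple_graph ie1 ie2 i1 i2) => E'.
    by rewrite E' eqxx in E.
- have i1 : incident (tauE e) v by apply/negPn/negP => h; exact: Ho v h H.
  have H2 : is_sink q' (sigV v).
    move=> g hg; have hf : incident (tauE g) v by rewrite -inc1.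
    have := (symat_out v (S _ (or_introl hf))).1 (H _ hf); by rewrite tauE_inv.
  have i2 : incident (tauE e) (sigV v) by apply/negPn/negP => h; exact: Hs _ h H2.
  have ie1 : incident e v by rewrite -inc_tau.
  have ie2 : incident e (sigV v) by rewrite inc1.
  case: (eqVneq v (sigV v)) => E.
  + have := (symat_out v (S e (or_introl ie1))).1 (H e ie1); rewrite -E => h.
    exact: in_out h (H _ i1).
  + apply: te; symmetry; apply: (simple_graph ie1 ie2 i1 i2) => E'.
    by rewrite E' eqxx in E.
Qed.


Definition sym (p : position n) := forall f, symat p f.

Lemma tauE_neq_inr (b : bool) : tauE (inr b) <> inr b.
Proof. case: b => //. Qed.

Lemma symat_mirror (p : position n) e d f : p e = None -> tauE e <> e ->
  (f <> e -> f <> tauE e -> symat p f) ->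
  symat (upd (upd p e d) (tauE e) (tdir e d)) f.
Proof.
move=> pe te H; rewrite /symat.
have ne : e <> tauE e by move=> E; apply: te; rewrite -E.
case: (eqVneq f e) => [->|fe].
  rewrite upd_same upd_other // upd_same; by case: e {pe te ne H}.
case: (eqVneq f (tauE e)) => [->|fte].
  rewrite tauE_inv upd_same upd_other // upd_same; case: e {pe te ne H fe} => //= b; by rewrite negbK.
have h1 : tauE f <> tauE e by move=> E; move: fe; rewrite -(tauE_inv f) E tauE_inv eqxx.
have h2 : tauE f <> e by move=> E; move: fte; rewrite -(tauE_inv f) E eqxx.
have h3 : f <> e by apply/eqP.
have h4 : f <> tauE e by apply/eqP.
rewrite !upd_other //; exact: H.
Qed.

Lemma symat_fixed (p : position n) e d f : tauE e = e -> tmap e (Some d) = Some d ->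
  (f <> e -> symat p f) -> symat (upd p e d) f.
Proof.
move=> te tm H; rewrite /symat.
case: (eqVneq f e) => [->|fe]; first by rewrite te upd_same.
have h : tauE f <> e by move=> E; move: fe; rewrite -(tauE_inv f) E te eqxx.
have h3 : f <> e by apply/eqP.
rewrite !upd_other //; exact: H.
Qed.

Lemma symat_far (p : position n) g c f : g <> f -> g <> tauE f -> symat p f ->
  symat (upd p g c) f.
Proof. move=> h1 h2; rewrite /symat !upd_other //; by move=> E; subst. Qed.

Lemma tri_cyc (p : position n) : cycle_cell p (@tri_cell n) <->
  exists s, p (inl (oo 0)) = Some s /\ p (inr true) = Some s /\ p (inr false) = Some (~~ s).
Proof.
split.
- move=> [s H]; exists s; split; last split.
  + have := H (inl (oo 0)) true; rewrite /= mod0n eqxx => ->//; by case: s.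
  + have := H (inr true) true => /= ->//; by case: s.
  + have := H (inr false) false => /= ->//; by case: s.
- move=> [s [h1 [h2 h3]]]; exists s => e d.
  case: e => [i|[]] /=.
  + case: ifP => // /eqP i0 [<-]; have -> : i = oo 0 by apply: val_inj; rewrite /= mod0n.
    by rewrite h1; case: s {h1 h2 h3}.
  + by move=> [<-]; rewrite h2; case: s {h1 h2 h3}.
  + by move=> [<-]; rewrite h3; case: s {h1 h2 h3}.
Qed.

Lemma big_cyc (p : position n) : cycle_cell p (@big_cell n) <->
  exists s, (forall i : 'I_n, val i != 0 -> p (inl i) = Some s) /\
    p (inr true) = Some (~~ s) /\ p (inr false) = Some s.
Proof.
split.
- move=> [s H]; exists s; split; last split.
  + move=> i i0; have := H (inl i) true; rewrite /= (negbTE i0) => ->//; by case: s.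
  + have := H (inr true) false => /= ->//; by case: s.
  + have := H (inr false) true => /= ->//; by case: s.
- move=> [s [h1 [h2 h3]]]; exists s => e d.
  case: e => [i|[]] /=.
  + case: ifP => // /negbT i0 [<-]; rewrite h1 //; by case: s {h1 h2 h3}.
  + by move=> [<-]; rewrite h2; case: s {h1 h2 h3}.
  + by move=> [<-]; rewrite h3; case: s {h1 h2 h3}.
Qed.

Lemma nocyc_B (p : position n) : p (inr true) = None \/ p (inr false) = None ->
  ~ has_cycle_cell p.
Proof.
move=> H [/tri_cyc [s [_ [h1 h2]]]|/big_cyc [s [_ [h1 h2]]]]; case: H; congruence.
Qed.

Lemma cyc_marked (p : position n) (C : cell n) e d : cycle_cell p C -> C e = Some d -> p e <> None.
Proof. by move=> [s H] /H ->. Qed.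

Lemma cyc_upd (p : position n) (C : cell n) e d : cycle_cell (upd p e d) C -> C e = None -> cycle_cell p C.
Proof.
move=> [s H] Ce; exists s => f c Cf; rewrite -(H f c Cf) upd_other //.
by move=> E; subst; rewrite Ce in Cf.
Qed.

Lemma tri_tau e : (@tri_cell n (tauE e) == None) = (@tri_cell n e == None).
Proof. case: e => [i|[]] //=; do 2 case: ifP => //; move=> h1 h2; move: h1 h2; arith. Qed.
Lemma big_tau e : (@big_cell n (tauE e) == None) = (@big_cell n e == None).
Proof. case: e => [i|[]] //=; do 2 case: ifP => //; move=> h1 h2; move: h1 h2; arith. Qed.

Lemma cyc_sym_step (p : position n) (C : cell n) e d :
  (forall f, (C (tauE f) == None) = (C f == None)) ->
  symat p e -> p e = None -> (tauE e = e -> False) -> ~ cycle_cell p C ->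
  ~ cycle_cell (upd p e d) C.
Proof.
move=> CT se pe te nc H.
case Ce: (C e) => [c|]; last exact: nc (cyc_upd H Ce).
have : C (tauE e) != None by rewrite CT Ce.
case Ct: (C (tauE e)) => [c'|] // _.
have hx : upd p e d (tauE e) = None.
  rewrite upd_other; first by rewrite se pe; case: e {se pe te Ce Ct H}.
  exact: te.
exact: (cyc_marked H Ct hx).
Qed.

Definition unm (p : position n) := #|[pred e | p e == None]|.

Lemma unm_upd (p : position n) e d : p e = None -> unm (upd p e d) < unm p.
Proof.
move=> pe; apply: proper_card; apply/properP; split.
  apply/subsetP => x; rewrite !inE /upd; by case: (x == e).
exists e; by rewrite !inE ?pe ?upd_same.
Qed.

Definition good (p : position n) := forall e d, legal p e d ->
  ~ has_cycle_cell (upd p e d) /\ wins (upd p e d).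

Lemma win_step (q : position n) f c : legal q f c ->
  (~ has_cycle_cell (upd q f c) -> good (upd q f c)) -> wins q.
Proof.
move=> hl H; apply: (wins_move hl).
case: (classic (has_cycle_cell (upd q f c))) => h; [by left | right].
move=> e' d' hl'; exact: H h e' d' hl'.
Qed.

Definition S1 (p : position n) := sym p /\ (forall f, tauE f = f -> p f <> None) /\ ~ has_cycle_cell p.

Lemma upd_ext (p : position n) e d f : p f <> None -> upd p e d f <> None.
Proof. rewrite /upd; by case: eqP. Qed.

Lemma S1_good_k k : forall p, unm p <= k -> S1 p -> good p.
Proof.
elim: k => [|k IH] p hk [sp [fx nc]] e d hl.
  have := unm_upd d (proj1 hl); by rewrite ltnNge (leq_trans hk) // leq0n.
have te : tauE e <> e by move=> E; exact: fx e E (proj1 hl).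
have nc1 : ~ has_cycle_cell (upd p e d).
  move=> [h|h].
  - apply: (@cyc_sym_step p _ e d tri_tau (sp e) (proj1 hl) te _ h) => hc; apply: nc; by left.
  - apply: (@cyc_sym_step p _ e d big_tau (sp e) (proj1 hl) te _ h) => hc; apply: nc; by right.
split => //.
have hq : upd p e d (tauE e) = None.
  rewrite upd_other //; rewrite sp (proj1 hl); by case: e {te hl nc1}.
have sq : sym (upd (upd p e d) (tauE e) (tdir e d)).
  move=> f; apply: symat_mirror; [exact: (proj1 hl) | exact: te | move=> _ _; exact: sp].
apply: (win_step (f := tauE e) (c := tdir e d)).
  split => //; split => v; have := @mirror_ok p e d v (legal_nosrc hl) te (fun f _ => sq f); by case.
move=> nc2; apply: (IH _ _ (conj sq (conj _ nc2))).
  have h1 := unm_upd d (proj1 hl); have h2 := unm_upd (tdir e d) hq; lia.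
move=> f tf; apply: upd_ext; apply: upd_ext; exact: fx.
Qed.

Lemma S1_good (p : position n) : S1 p -> good p.
Proof. exact: (@S1_good_k (unm p)). Qed.

Lemma legal_ns (q : position n) e d : q e = None -> nosrc (upd q e d) -> legal q e d.
Proof. move=> h1 h2; split => //; split => v; by case: (h2 v). Qed.


Lemma vert_two (v : vertex n) : exists f g, f <> g /\ incident f v /\ incident g v.
Proof.
case: v => [j|]; last by exists (inr true), (inr false).
exists (inl j), (inl (oo (j + n.-1))); split; last split.
- move=> [E]; have := congr1 val E; arith.
- by rewrite /incident /= eqxx.
- rewrite /incident /=; apply/orP; right; arith.
Qed.

Lemma good_other (p : position n) e d v : (forall f, f <> e -> p f = None) ->
  good_vertex (upd p e d) v.
Proof.
move=> H; have [f [g [fg [hf hg]]]] := vert_two v; left.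
case: (eqVneq f e) => [E|fe].
- exists g; split => //; rewrite upd_other; last by move=> E'; apply: fg; rewrite E E'.
  apply: H => E'; apply: fg; by rewrite E E'.
- have fe' : f <> e by apply/eqP.
  exists f; split => //; rewrite upd_other //; exact: H.
Qed.

Lemma nosrc_empty : nosrc (@empty_pos n).
Proof.
move=> v; apply: good_ok; have [f [g [_ [hf _]]]] := vert_two v; left; by exists f.
Qed.

Lemma legal_empty e d : legal (@empty_pos n) e d.
Proof.
apply: legal_local; [by [] | exact: nosrc_empty | move=> v _; exact: good_other].
Qed.

Lemma sym_empty : sym (@empty_pos n).
Proof. by move=> [i|b]. Qed.

Lemma tau_e0 : tauE (inl (oo 0)) = inl (oo 0).
Proof. congr inl; apply: val_inj => /=; arith. Qed.

Lemma fixed_odd f : odd n -> tauE f = f -> f = inl (oo 0).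
Proof.
move=> on; case: f => [i|b] /=; last by case: b.
move=> [E]; have := congr1 val E => /= h.
have h2 := odd_double_half n; rewrite on -muln2 in h2.
congr inl; apply: val_inj => /=; move: h h2; arith.
Qed.

Theorem odd_case : odd n -> player1_wins n.
Proof.
move=> on; rewrite /player1_wins.
apply: (win_step (f := inl (oo 0)) (c := true)); first exact: legal_empty.
move=> _; apply: S1_good; split; last split.
- move=> f; apply: symat_fixed => //; [exact: tau_e0 | move=> _; exact: sym_empty].
- move=> f /(fixed_odd on) ->; by rewrite upd_same.
- apply: nocyc_B; left; by rewrite upd_other.
Qed.


Definition dirin (f : edge n) (v : vertex n) (x : bool) := if x then is_head f v else is_tail f v.

Lemma pin (p : position n) f v x : p f = Some x -> dirin f v x -> points_in p f v.
Proof. rewrite /points_in /dirin => ->; case: x => h; [left|right]; by split. Qed.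

Lemma pout (p : position n) f v x : p f = Some x -> incident f v -> ~~ dirin f v x ->
  points_out p f v.
Proof.
rewrite /points_out /dirin /incident => ->; case: x => /= h1 h2.
- left; split => //; move: h1 h2; by case: (is_tail f v); case: (is_head f v).
- right; split => //; move: h1 h2; by case: (is_tail f v); case: (is_head f v).
Qed.

Lemma good2 (p : position n) v f g x y : incident f v -> incident g v ->
  (p f = None \/ p f = Some x) -> (p g = None \/ p g = Some y) ->
  dirin f v x != dirin g v y -> good_vertex p v.
Proof.
move=> hf hg [pf|pf]; first by left; exists f.
move=> [pg|pg]; first by left; exists g.
move=> D; right; case Ef: (dirin f v x); rewrite Ef in D.
- split; [exists f; exact: pin pf Ef | exists g; apply: pout pg hg _; by case: (dirin g v y) D].
- split; [exists g; apply: (@pin p g v y pg); by case: (dirin g v y) D | exists f; apply: pout pf hf _; by rewrite Ef].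
Qed.

Lemma bad_all (p : position n) v c :
  (forall h, incident h v -> exists x, p h = Some x /\ dirin h v x = c) ->
  ~ (~ is_sink p v /\ ~ is_source p v).
Proof.
move=> H [n1 n2]; case: c H => H.
- apply: n1 => h hh; have [x [px dx]] := H h hh; exact: pin px dx.
- apply: n2 => h hh; have [x [px dx]] := H h hh; apply: pout px hh _; by rewrite dx.
Qed.

Lemma ord_eq (i : 'I_n) k : val i = k %% n -> i = oo k.
Proof. move=> h; exact: val_inj. Qed.

Lemma inc_v0 f : incident f (Some (oo 0)) ->
  f = inl (oo 0) \/ f = inl (oo n.-1) \/ f = inr true.
Proof.
rewrite /incident; case: f => [i|[]] /=.
- move=> h; have : val i = 0 %% n \/ val i = n.-1 %% n by move: h; arith.
  by case=> /ord_eq ->; auto.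
- auto.
- move=> h; exfalso; move: h; arith.
Qed.

Lemma inc_v1 f : incident f (Some (oo 1)) ->
  f = inl (oo 0) \/ f = inl (oo 1) \/ f = inr false.
Proof.
rewrite /incident; case: f => [i|[]] /=.
- move=> h; have : val i = 0 %% n \/ val i = 1 %% n by move: h; arith.
  by case=> /ord_eq ->; auto.
- move=> h; exfalso; move: h; arith.
- auto.
Qed.

Lemma inc_vw (w : 'I_n) f : 2 <= val w -> incident f (Some w) ->
  f = inl w \/ f = inl (oo (val w).-1).
Proof.
move=> w2; rewrite /incident; case: f => [i|[]] /=.
- move=> h; have : val i = val w %% n \/ val i = (val w).-1 %% n by move: h; arith.
  case=> /ord_eq ->; [left; by rewrite oo_val | by right].
- move=> h; exfalso; move: h; arith.
- move=> h; exfalso; move: h; arith.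
Qed.

Lemma inc_va (f : edge n) : incident f None -> f = inr true \/ f = inr false.
Proof. case: f => [i|[]] //=; auto. Qed.

Lemma inc_inl (i : 'I_n) v : incident (inl i) v -> v = Some i \/ v = Some (oo (val i).+1).
Proof.
case: v => [j|] //=; rewrite /incident /= => h.
have : val j = val i %% n \/ val j = (val i).+1 %% n by move: h; arith.
case=> /ord_eq ->; [left; by rewrite oo_val | by right].
Qed.

Lemma inc_inr b (v : vertex n) : incident (inr b) v -> v = None \/ v = Some (oo (if b then 0 else 1)).
Proof.
case: v => [j|] //=; last by auto.
rewrite /incident; case: b => /= h; right; congr Some; apply: ord_eq; move: h; arith.
Qed.

Lemma inr_inc_j b (j : 'I_n) : incident (inr b) (Some j) -> val j = 0 \/ val j = 1.
Proof. rewrite /incident; case: b => /= /eqP; auto. Qed.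

Lemma flow_good (p : position n) s :
  (forall i : 'I_n, val i != 0 -> p (inl i) = None \/ p (inl i) = Some (~~ s)) ->
  (p (inr true) = None \/ p (inr true) = Some s) ->
  (p (inr false) = None \/ p (inr false) = Some (~~ s)) -> nosrc p.
Proof.
move=> HC H0 H1 v; apply: good_ok.
case: v => [j|].
- case: (ltnP 1 (val j)) => j2.
  + have hj1 : val (oo (val j).-1) != 0 by arith.
    have hj : val j != 0 by lia.
    apply: (good2 (f := inl j) (g := inl (oo (val j).-1)) (x := ~~ s) (y := ~~ s)).
    * by rewrite /incident /= eqxx.
    * rewrite /incident /=; apply/orP; right; arith.
    * exact: HC.
    * exact: HC.
    * rewrite /dirin; clear HC H0 H1; case: s => /=; arith.
  + have : j = oo 0 \/ j = oo 1 by case: (val j) j2 (@ord_eq j 0) (@ord_eq j 1) => [|[|]] //= _ h1 h2; [left; apply: h1; rewrite mod0n | right; apply: h2; rewrite modn_small //; lia].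
    case=> ->.
    * have hj1 : val (oo n.-1) != 0 by arith.
      apply: (good2 (f := inr true) (g := inl (oo n.-1)) (x := s) (y := ~~ s)) => //.
      -- rewrite /incident /=; arith.
      -- rewrite /incident /=; arith.
      -- exact: HC.
      -- rewrite /dirin; clear HC H0 H1; case: s => /=; arith.
    * have hj1 : val (oo 1) != 0 by arith.
      apply: (good2 (f := inr false) (g := inl (oo 1)) (x := ~~ s) (y := ~~ s)) => //.
      -- rewrite /incident /=; arith.
      -- rewrite /incident /=; arith.
      -- exact: HC.
      -- rewrite /dirin; clear HC H0 H1; case: s => /=; arith.
- apply: (good2 (f := inr true) (g := inr false) (x := s) (y := ~~ s)) => //.
  clear HC H0 H1; by case: s.
Qed.


Lemma deg2_bad (q : position n) (w : 'I_n) x : 2 <= val w ->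
  q (inl w) = Some x -> q (inl (oo (val w).-1)) = Some (~~ x) -> ~ nosrc q.
Proof.
move=> w2 h1 h2 ns; apply: (@bad_all q (Some w) (~~ x)); last exact: ns.
move=> h /(inc_vw w2) [->|->].
- exists x; split => //; rewrite /dirin; case: x {h1 h2} => /=; arith.
- exists (~~ x); split => //; rewrite /dirin; case: x {h1 h2} => /=; arith.
Qed.

Lemma a_bad (q : position n) x : q (inr true) = Some x -> q (inr false) = Some x -> ~ nosrc q.
Proof.
move=> h1 h2 ns; apply: (@bad_all q None (~~ x)); last exact: ns.
move=> h /inc_va [->|->]; exists x; split => //; by case: x {h1 h2}.
Qed.

Lemma upd_inl_inr (p : position n) i b d : upd p (inl i) d (inr b) = p (inr b).
Proof. by rewrite /upd. Qed.
Lemma upd_inr_inl (p : position n) i b d : upd p (inr b) d (inl i) = p (inl i).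
Proof. by rewrite /upd. Qed.
Lemma upd_inl_inl (p : position n) i j d : upd p (inl j) d (inl i) = if i == j then Some d else p (inl i).
Proof. by rewrite /upd. Qed.
Lemma upd_inr_inr (p : position n) b c d : upd p (inr c) d (inr b) = if b == c then Some d else p (inr b).
Proof. by rewrite /upd. Qed.

Definition bflow (p : position n) s :=
  (p (inr true) = Some s /\ p (inr false) = None) \/ (p (inr true) = None /\ p (inr false) = Some (~~ s)).

Definition Zst (p : position n) s (j0 : 'I_n) :=
  p (inl (oo 0)) = Some (~~ s) /\ bflow p s /\ val j0 != 0 /\ p (inl j0) = None /\
  (forall i : 'I_n, val i != 0 -> i <> j0 -> p (inl i) = Some (~~ s)).

Lemma Z_good p s j0 : Zst p s j0 -> good p.
Proof.
move=> [h0 [hb [hj0 [hy hC]]]] e d hl.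
have ns := legal_nosrc hl; have pe := proj1 hl.
case: e hl ns pe => [i|b] hl ns pe.
- case: (eqVneq i j0) => [Eij|Nij]; last first.
    exfalso; case: (eqVneq (val i) 0) => i0.
      have E : i = oo 0 by apply: ord_eq; rewrite i0 mod0n.
      by rewrite E h0 in pe.
    have Nij' : i <> j0 by apply/eqP.
    by rewrite (hC i i0 Nij') in pe.
  subst i.
  case: (eqVneq d s) => [Eds|Nds].
    exfalso; subst d; case: (ltnP 1 (val j0)) => j2.
      apply: (@deg2_bad _ j0 s j2 _ _ ns); first by rewrite upd_same.
      rewrite upd_inl_inl; case: eqP => [E|_]; first by move: (congr1 val E); arith.
      apply: hC; first arith.
      by move=> E; move: (congr1 val E); arith.
    have w2 : 2 <= val (oo 2) by arith.
    apply: (@deg2_bad _ (oo 2) (~~ s) w2 _ _ ns).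
      rewrite upd_inl_inl; case: eqP => [E|_]; first by move: (congr1 val E); arith.
      apply: hC; first arith.
      by move=> E; move: (congr1 val E); arith.
    rewrite upd_inl_inl negbK; case: eqP => // E; exfalso; apply: E; apply: val_inj; arith.
  have Ed : d = ~~ s by move: Nds; case: (d); case: (s).
  subst d.
  have hCq : forall i : 'I_n, val i != 0 -> upd p (inl j0) (~~ s) (inl i) = Some (~~ s).
    move=> i i0; rewrite upd_inl_inl; case: eqP => // /eqP Nij; apply: hC => //; exact/eqP.
  case: hb => [[b0s b1n]|[b0n b1s]].
  + split; first by apply: nocyc_B; right; rewrite upd_inl_inr.
    apply: (win_step (f := inr false) (c := ~~ s)).
      apply: legal_ns; first by rewrite upd_inl_inr.
      apply: (flow_good (s := s)).
      * move=> i i0; right; rewrite upd_inr_inl; exact: hCq.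
      * by right; rewrite upd_inr_inr /= upd_inl_inr.
      * by right; rewrite upd_same.
    move=> nc; exfalso; apply: nc; right; apply/big_cyc; exists (~~ s); split; last split.
      * move=> i i0; rewrite upd_inr_inl; exact: hCq.
      * by rewrite upd_inr_inr /= upd_inl_inr negbK.
      * by rewrite upd_same.
  + split; first by apply: nocyc_B; left; rewrite upd_inl_inr.
    apply: (win_step (f := inr true) (c := s)).
      apply: legal_ns; first by rewrite upd_inl_inr.
      apply: (flow_good (s := s)).
      * move=> i i0; right; rewrite upd_inr_inl; exact: hCq.
      * by right; rewrite upd_same.
      * by right; rewrite upd_inr_inr /= upd_inl_inr.
    move=> nc; exfalso; apply: nc; right; apply/big_cyc; exists (~~ s); split; last split.
      * move=> i i0; rewrite upd_inr_inl; exact: hCq.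
      * by rewrite upd_same negbK.
      * by rewrite upd_inr_inr /= upd_inl_inr ?b0s ?b1s.
-
  have [hB1 hB2] : upd p (inr b) d (inr true) = Some s /\ upd p (inr b) d (inr false) = Some (~~ s).
    case: hb => [[b0s b1n]|[b0n b1s]]; case: b pe hl ns => pe hl ns; rewrite ?b0s ?b1s // in pe.
    + split; first by rewrite upd_inr_inr /= b0s.
      rewrite upd_same; case: (eqVneq d (~~ s)) => [->//|Nd]; exfalso.
      apply: (@a_bad _ s _ _ ns); first by rewrite upd_inr_inr /= b0s.
      rewrite upd_same; congr Some; by move: Nd; case: (d); case: (s).
    + split; last by rewrite upd_inr_inr /= b1s.
      rewrite upd_same; case: (eqVneq d s) => [->//|Nd]; exfalso.
      apply: (@a_bad _ (~~ s) _ _ ns); last by rewrite upd_inr_inr /= b1s.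
      rewrite upd_same; congr Some; by move: Nd; case: (d); case: (s).
  split.
    move=> [/tri_cyc [s' [h1 [h2 h3]]]|/big_cyc [s' [h1 [h2 h3]]]].
      rewrite upd_inr_inl h0 in h1; rewrite hB1 in h2.
      case: h1 => E1; case: h2 => E2; by move: E1; rewrite -E2; case: (s).
    move: (h1 j0 hj0); by rewrite upd_inr_inl hy.
  apply: (win_step (f := inl j0) (c := ~~ s)).
    apply: legal_ns; first by rewrite upd_inr_inl.
    apply: (flow_good (s := s)).
    * move=> i i0; right; rewrite upd_inl_inl; case: eqP => // /eqP Nij.
      rewrite upd_inr_inl; apply: hC => //; exact/eqP.
    * by right; rewrite upd_inl_inr.
    * by right; rewrite upd_inl_inr.
  move=> nc; exfalso; apply: nc; right; apply/big_cyc; exists (~~ s); split; last split.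
    * move=> i i0; rewrite upd_inl_inl; case: eqP => // /eqP Nij.
      rewrite upd_inr_inl; apply: hC => //; exact/eqP.
    * by rewrite upd_inl_inr hB1 negbK.
    * by rewrite upd_inl_inr hB2.
Qed.


Lemma not_all3 (T : Type) (A B C : T -> Prop) :
  ~ (forall k, A k -> B k -> C k) -> exists k, A k /\ B k /\ ~ C k.
Proof.
move=> H; apply: NNPP => H2; apply: H => k hA hB; apply: NNPP => hC; apply: H2; by exists k.
Qed.

Section Even.
Variable m : nat.
Hypothesis hm : n = m + m.

Lemma m2 : 2 <= m. Proof. lia. Qed.
Lemma mn : m < n. Proof. lia. Qed.

Lemma tau_em : tauE (inl (oo m)) = inl (oo m).
Proof. have h1 := m2; have h2 := mn; congr inl; apply: val_inj => /=; arith. Qed.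

Lemma fixed_even f : tauE f = f -> f = inl (oo 0) \/ f = inl (oo m).
Proof.
have := m2; have := mn.
case: f => [i|b] /= h1 h2; last by case: b.
move=> [E]; have := congr1 val E => /= h.
have : val i = 0 %% n \/ val i = m %% n by move: h; arith.
by case=> /ord_eq ->; auto.
Qed.

Definition SY (p : position n) s :=
  (forall i, symat p (inl i)) /\ p (inl (oo 0)) = None /\ p (inl (oo m)) <> None /\
  bflow p s /\ (exists i : 'I_n, val i != 0 /\ p (inl i) <> Some (~~ s)).

Lemma good_va (q : position n) s : q (inr true) = Some s -> q (inr false) = Some (~~ s) ->
  good_vertex q None.
Proof.
move=> h1 h2; apply: (good2 (f := inr true) (g := inr false) (x := s) (y := ~~ s)) => //;
  [by right | by right | by case: (s)].
Qed.

Lemma csym_S1 (q : position n) s : (forall i, symat q (inl i)) ->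
  q (inr true) = Some s -> q (inr false) = Some (~~ s) ->
  q (inl (oo 0)) <> None -> q (inl (oo m)) <> None -> ~ has_cycle_cell q -> S1 q.
Proof.
move=> hc h1 h2 h3 h4 nc; split; last split => //.
- case=> [i|b]; first exact: hc.
  by rewrite /symat /=; case: b; rewrite /= ?h1 ?h2 /= ?negbK.
- by move=> f /fixed_even [->|->].
Qed.

Lemma SY_good_k k : forall p s, unm p <= k -> SY p s -> good p.
Proof.
elim: k => [|k IH] p s hk [hc [h0 [hm0 [hb [w [w0 hw]]]]]] e d hl.
  have := unm_upd d (proj1 hl); lia.
have ns := legal_nosrc hl; have pe := proj1 hl.
case: e hl ns pe => [i|b] hl ns pe.
- case: (eqVneq (val i) 0) => i0.
  {
  have Ei : i = oo 0 by apply: ord_eq; rewrite i0 mod0n.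
  subst i.
  case: hb => [[b0s b1n]|[b0n b1s]].
  + split; first by apply: nocyc_B; right; rewrite upd_inl_inr.
    apply: (win_step (f := inr false) (c := ~~ s)).
      apply: legal_local; [by rewrite upd_inl_inr | exact: ns | ].
      move=> v /inc_inr [->|->] /=.
        apply: (good_va (s := s)); [by rewrite upd_inr_inr /= upd_inl_inr | by rewrite upd_same].
      case: (eqVneq d s) => [Eds|Nds].
        subst d; apply: (good2 (f := inl (oo 0)) (g := inr false) (x := s) (y := ~~ s)).
        * rewrite /incident /=; arith.
        * rewrite /incident /=; arith.
        * by right; rewrite upd_inr_inl upd_same.
        * by right; rewrite upd_same.
        * rewrite /dirin; clear -hn; case: (s) => /=; arith.
      have Ed : d = ~~ s by move: Nds; case: (d); case: (s).
      subst d.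
      have q1 : upd (upd p (inl (oo 0)) (~~ s)) (inr false) (~~ s) (inl (oo 1)) = p (inl (oo 1)).
        rewrite upd_inr_inl upd_inl_inl; case: eqP => // E; move: (congr1 val E); arith.
      case E1 : (p (inl (oo 1))) => [x|]; last first.
        left; exists (inl (oo 1)); split; [rewrite /incident /=; arith | by rewrite q1].
      case: (eqVneq x (~~ s)) => [Ex|Nx].
        subst x; apply: (good2 (f := inl (oo 0)) (g := inl (oo 1)) (x := ~~ s) (y := ~~ s)).
        * rewrite /incident /=; arith.
        * rewrite /incident /=; arith.
        * by right; rewrite upd_inr_inl upd_same.
        * by right; rewrite q1.
        * rewrite /dirin; clear -hn; case: (s) => /=; arith.
      have Ex : x = s by move: Nx; case: (x); case: (s).
      subst x; exfalso; apply: (@bad_all _ (Some (oo 0)) s _ (ns (Some (oo 0)))).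
      have En : oo (n - oo 1) = oo n.-1 by apply: val_inj; arith.
      have hn1 : p (inl (oo n.-1)) = Some s by rewrite -En (hc (oo 1)) E1.
      move=> h /inc_v0 [->|[->|->]].
      * exists (~~ s); split; first by rewrite upd_same.
        rewrite /dirin; clear -hn; case: (s) => /=; arith.
      * exists s; split; first by rewrite upd_inl_inl; case: eqP => [E|_]; [move: (congr1 val E); arith | exact: hn1].
        rewrite /dirin; clear -hn; case: (s) => /=; arith.
      * exists s; split; first by rewrite upd_inl_inr b0s.
        rewrite /dirin; clear -hn; case: (s) => /=; arith.
    move=> nc.
    case: (eqVneq d s) => [Eds|Nds].
      subst d; exfalso; apply: nc; left; apply/tri_cyc; exists s; split; last split.
      * by rewrite upd_inr_inl upd_same.
      * by rewrite upd_inr_inr /= upd_inl_inr ?b0s ?b1s.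
      * by rewrite upd_same.
    apply: S1_good; apply: (csym_S1 (s := s)); last exact: nc.
    * move=> j; apply: symat_far; [by [] | by [] | ].
      apply: symat_fixed; [exact: tau_e0 | by [] | move=> _; exact: hc].
    * by rewrite upd_inr_inr /= upd_inl_inr ?b0s ?b1s.
    * by rewrite upd_same.
    * by rewrite upd_inr_inl upd_same.
    * by apply: upd_ext; apply: upd_ext.
  + split; first by apply: nocyc_B; left; rewrite upd_inl_inr.
    apply: (win_step (f := inr true) (c := s)).
      apply: legal_local; [by rewrite upd_inl_inr | exact: ns | ].
      move=> v /inc_inr [->|->] /=.
        apply: (good_va (s := s)); [by rewrite upd_same | by rewrite upd_inr_inr /= upd_inl_inr ?b0s ?b1s].
      case: (eqVneq d s) => [Eds|Nds].
        subst d; apply: (good2 (f := inl (oo 0)) (g := inr true) (x := s) (y := s)).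
        * rewrite /incident /=; arith.
        * rewrite /incident /=; arith.
        * by right; rewrite upd_inr_inl upd_same.
        * by right; rewrite upd_same.
        * rewrite /dirin; clear -hn; case: (s) => /=; arith.
      have Ed : d = ~~ s by move: Nds; case: (d); case: (s).
      subst d.
      have En : oo (n - oo 1) = oo n.-1 by apply: val_inj; arith.
      have q1 : upd (upd p (inl (oo 0)) (~~ s)) (inr true) s (inl (oo n.-1)) = p (inl (oo n.-1)).
        rewrite upd_inr_inl upd_inl_inl; case: eqP => // E; move: (congr1 val E); arith.
      case E1 : (p (inl (oo n.-1))) => [x|]; last first.
        left; exists (inl (oo n.-1)); split; [rewrite /incident /=; arith | by rewrite q1].
      case: (eqVneq x (~~ s)) => [Ex|Nx].
        subst x; apply: (good2 (f := inl (oo 0)) (g := inl (oo n.-1)) (x := ~~ s) (y := ~~ s)).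
        * rewrite /incident /=; arith.
        * rewrite /incident /=; arith.
        * by right; rewrite upd_inr_inl upd_same.
        * by right; rewrite q1.
        * rewrite /dirin; clear -hn; case: (s) => /=; arith.
      have Ex : x = s by move: Nx; case: (x); case: (s).
      subst x; exfalso; apply: (@bad_all _ (Some (oo 1)) (~~ s) _ (ns (Some (oo 1)))).
      have hn1 : p (inl (oo 1)) = Some s by move: (hc (oo 1)); rewrite /symat /= En E1.
      move=> h /inc_v1 [->|[->|->]].
      * exists (~~ s); split; first by rewrite upd_same.
        rewrite /dirin; clear -hn; case: (s) => /=; arith.
      * exists s; split; first by rewrite upd_inl_inl; case: eqP => [E|_]; [move: (congr1 val E); arith | exact: hn1].
        rewrite /dirin; clear -hn; case: (s) => /=; arith.
      * exists (~~ s); split; first by rewrite upd_inl_inr b1s.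
        rewrite /dirin; clear -hn; case: (s) => /=; arith.
    move=> nc.
    case: (eqVneq d s) => [Eds|Nds].
      subst d; exfalso; apply: nc; left; apply/tri_cyc; exists s; split; last split.
      * by rewrite upd_inr_inl upd_same.
      * by rewrite upd_same.
      * by rewrite upd_inr_inr /= upd_inl_inr ?b0s ?b1s.
    apply: S1_good; apply: (csym_S1 (s := s)); last exact: nc.
    * move=> j; apply: symat_far; [by [] | by [] | ].
      apply: symat_fixed; [exact: tau_e0 | by [] | move=> _; exact: hc].
    * by rewrite upd_same.
    * by rewrite upd_inr_inr /= upd_inl_inr ?b0s ?b1s.
    * by rewrite upd_inr_inl upd_same.
    * by apply: upd_ext; apply: upd_ext.
  }
  case: (eqVneq (val i) m) => im.
    exfalso; have Ei : i = oo m by apply: ord_eq; rewrite im modn_small // mn.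
    by rewrite Ei in pe.
  have ti : tauE (inl i) <> inl i.
    by move=> /fixed_even [[E]|[E]]; move: i0 im; rewrite E /=; have := mn; arith.
  have pj : p (inl (oo (n - i))) = None by move: (hc i); rewrite /symat /= pe.
  have qj : upd p (inl i) d (inl (oo (n - i))) = None.
    rewrite upd_inl_inl; case: eqP => [E|_] //; by case: ti; rewrite /= E.
  have nc1 : ~ has_cycle_cell (upd p (inl i) d).
    apply: nocyc_B; rewrite !upd_inl_inr; case: hb => [[_ ->]|[-> _]]; by [right|left].
  have e0q : upd p (inl i) d (inl (oo 0)) = None.
    rewrite upd_inl_inl; case: eqP => [E|_] //; by move: i0; rewrite -E /= mod0n.
  split => //.
  case: (classic (forall k : 'I_n, val k != 0 -> k <> oo (n - i) ->
           upd p (inl i) d (inl k) = Some (~~ s))) => [All|nAll].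
  + apply: (win_step (f := inl (oo 0)) (c := ~~ s)).
      apply: legal_ns => //; apply: (flow_good (s := s)).
      * move=> k' k0; rewrite upd_inl_inl; case: eqP => [E|_].
          by move: k0; rewrite E /= mod0n.
        case: (eqVneq k' (oo (n - i))) => [->|Nk]; first by left.
        right; apply: All => //; exact/eqP.
      * rewrite !upd_inl_inr; case: hb => [[-> _]|[-> _]]; by [right|left].
      * rewrite !upd_inl_inr; case: hb => [[_ ->]|[_ ->]]; by [left|right].
    move=> _; apply: (@Z_good _ s (oo (n - i))); split; last split; last split; last split.
    * by rewrite upd_same.
    * by rewrite /bflow !upd_inl_inr.
    * move: i0 im; have := mn; arith.
    * rewrite upd_inl_inl; case: eqP => [E|_] //; move: (congr1 val E) i0; arith.
    * move=> k' k0 kn; rewrite upd_inl_inl; case: eqP => [E|_].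
        by move: k0; rewrite E /= mod0n.
      exact: All.
  + have [kk [k0 [kj kq]]] := not_all3 nAll.
    have sq : forall j, symat (upd (upd p (inl i) d) (tauE (inl i)) (tdir (inl i) d)) (inl j).
      move=> j; apply: symat_mirror => // _ _; exact: hc.
    apply: (win_step (f := tauE (inl i)) (c := tdir (inl i) d)).
      apply: legal_ns => //; case=> [j|].
      * case: (ltnP 1 (val j)) => j2.
          apply: (@mirror_ok p (inl i) d (Some j) ns ti) => -[j'|b'] H; first exact: sq.
          exfalso; case: H => /inr_inc_j; rewrite /= ?val_oo; arith.
        apply: good_ok; left; exists (inl (oo 0)); split.
          rewrite /incident /=; arith.
        rewrite upd_inl_inl; case: eqP => [E|_] //; move: (congr1 val E) i0 im; have := mn; arith.
      * have [[A1 _] [A2 _]] := @sink_nonincident (upd p (inl i) d) (tauE (inl i)) (tdir (inl i) d) None isT.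
        case: (ns None) => n1 n2; split => h; [exact: n1 (A1 h) | exact: n2 (A2 h)].
    move=> nc2; apply: (IH _ s); last split; last split; last split; last split.
    * have h1 := unm_upd d pe; have h2 := @unm_upd (upd p (inl i) d) (tauE (inl i)) (tdir (inl i) d) qj; lia.
    * exact: sq.
    * rewrite upd_inl_inl; case: eqP => [E|_] //; move: (congr1 val E) i0 im; have := mn; arith.
    * by apply: upd_ext; apply: upd_ext.
    * by rewrite /bflow !upd_inl_inr.
    * exists kk; split => //; rewrite upd_inl_inl; case: eqP => [E|_] //.
-
  have [hB1 hB2] : upd p (inr b) d (inr true) = Some s /\ upd p (inr b) d (inr false) = Some (~~ s).
    case: hb => [[b0s b1n]|[b0n b1s]]; case: b pe hl ns => pe hl ns; rewrite ?b0s ?b1s // in pe.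
    + split; first by rewrite upd_inr_inr /= b0s.
      rewrite upd_same; case: (eqVneq d (~~ s)) => [->//|Nd]; exfalso.
      apply: (@a_bad _ s _ _ ns); first by rewrite upd_inr_inr /= b0s.
      rewrite upd_same; congr Some; by move: Nd; case: (d); case: (s).
    + split; last by rewrite upd_inr_inr /= b1s.
      rewrite upd_same; case: (eqVneq d s) => [->//|Nd]; exfalso.
      apply: (@a_bad _ (~~ s) _ _ ns); last by rewrite upd_inr_inr /= b1s.
      rewrite upd_same; congr Some; by move: Nd; case: (d); case: (s).
  split.
    move=> [/tri_cyc [s' [h1 _]]|/big_cyc [s' [h1 [h2 h3]]]].
      by rewrite upd_inr_inl h0 in h1.
    rewrite hB1 in h2; case: h2 => E2; have E3 : s' = ~~ s by rewrite E2 negbK.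
    move: (h1 w w0); rewrite upd_inr_inl E3 => E; by apply: hw.
  apply: (win_step (f := inl (oo 0)) (c := s)).
    apply: legal_local; [by rewrite upd_inr_inl | exact: ns | ].
    move=> v /inc_inl [->|->].
    * apply: (good2 (f := inl (oo 0)) (g := inr true) (x := s) (y := s)).
      -- rewrite /incident /=; arith.
      -- rewrite /incident /=; arith.
      -- by right; rewrite upd_same.
      -- by right; rewrite upd_inl_inr.
      -- rewrite /dirin; clear -hn; case: (s) => /=; arith.
    * apply: (good2 (f := inl (oo 0)) (g := inr false) (x := s) (y := ~~ s)).
      -- rewrite /incident /=; arith.
      -- rewrite /incident /=; arith.
      -- by right; rewrite upd_same.
      -- by right; rewrite upd_inl_inr.
      -- rewrite /dirin; clear -hn; case: (s) => /=; arith.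
  move=> nc; exfalso; apply: nc; left; apply/tri_cyc; exists s; split; last split.
  * by rewrite upd_same.
  * by rewrite upd_inl_inr.
  * by rewrite upd_inl_inr.
Qed.


Lemma SY_good (p : position n) s : SY p s -> good p.
Proof. exact: (@SY_good_k (unm p)). Qed.

Lemma em_local (q : position n) c : (forall i, symat q (inl i)) ->
  q (inl (oo m)) = None -> nosrc q ->
  (q (inl (oo m.-1)) = None \/ q (inl (oo m.-1)) = Some c) -> legal q (inl (oo m)) c.
Proof.
move=> hc hq ns hqm1; have h1 := m2; have h2 := mn.
apply: legal_local; [exact: hq | exact: ns | ].
have Em1 : oo (n - oo m.-1) = oo m.+1 by apply: val_inj; arith.
have hqp1 : q (inl (oo m.+1)) = q (inl (oo m.-1)) by move: (hc (oo m.-1)); rewrite /symat /= Em1.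
have u1 : upd q (inl (oo m)) c (inl (oo m.-1)) = q (inl (oo m.-1)).
  rewrite upd_inl_inl; case: eqP => // E; move: (congr1 val E); arith.
have u2 : upd q (inl (oo m)) c (inl (oo m.+1)) = q (inl (oo m.+1)).
  rewrite upd_inl_inl; case: eqP => // E; move: (congr1 val E); arith.
move=> v /inc_inl [->|->].
- apply: (good2 (f := inl (oo m)) (g := inl (oo m.-1)) (x := c) (y := c)).
  + rewrite /incident /=; arith.
  + rewrite /incident /=; arith.
  + by right; rewrite upd_same.
  + by rewrite u1.
  + rewrite /dirin; clear -hn hm h1 h2; case: (c) => /=; arith.
- apply: (good2 (f := inl (oo m)) (g := inl (oo m.+1)) (x := c) (y := c)).
  + rewrite /incident /=; arith.
  + rewrite /incident /=; arith.
  + by right; rewrite upd_same.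
  + by rewrite u2 hqp1.
  + rewrite /dirin; clear -hn hm h1 h2; case: (c) => /=; arith.
Qed.

Definition S0 (p : position n) := sym p /\ p (inl (oo 0)) = None /\ p (inl (oo m)) = None /\
  p (inr true) = None /\ p (inr false) = None.

Lemma oo_m0 : inl (oo m) <> inl (oo 0) :> edge n.
Proof. have h1 := m2; have h2 := mn; move=> [E]; move: E; arith. Qed.

Lemma S0_good_k k : forall p, unm p <= k -> S0 p -> good p.
Proof.
have hm2 := m2; have hmn := mn.
elim: k => [|k IH] p hk [sp [h0 [hm0 [hb0 hb1]]]] e d hl.
  have := unm_upd d (proj1 hl); lia.
have ns := legal_nosrc hl; have pe := proj1 hl.
have nc1 : ~ has_cycle_cell (upd p e d).
  apply: nocyc_B; case: e pe hl ns => [i|[]] pe hl ns.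
  - by left; rewrite upd_inl_inr.
  - by right; rewrite upd_inr_inr /=.
  - by left; rewrite upd_inr_inr /=.
split => //.
have csq : forall j, symat (upd p e d) (inl j) -> True by [].
case: e hl ns pe nc1 {csq} => [i|b] hl ns pe nc1.
- case: (eqVneq (val i) 0) => i0.
  { have Ei : i = oo 0 by apply: ord_eq; rewrite i0 mod0n.
    subst i.
    have hq : forall j, symat (upd p (inl (oo 0)) d) (inl j).
      move=> j; apply: symat_fixed; [exact: tau_e0 | by [] | move=> _; exact: sp].
    have qm : upd p (inl (oo 0)) d (inl (oo m)) = None by rewrite upd_inl_inl; case: eqP => // E; case: oo_m0; rewrite E.
    case E1 : (upd p (inl (oo 0)) d (inl (oo m.-1))) => [x|].
    all: apply: (win_step (f := inl (oo m)) (c := odflt true (upd p (inl (oo 0)) d (inl (oo m.-1))))).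
    1,3: apply: em_local => //; rewrite E1 /=; by [left|right].
    all: move=> nc2; apply: S1_good; split; last split => //.
    1,3: move=> f; apply: symat_fixed; [exact: tau_em | by [] | move=> _; apply: symat_fixed; [exact: tau_e0 | by [] | move=> _; exact: sp]].
    all: move=> f /fixed_even [->|->]; [rewrite upd_inl_inl; case: eqP => [E|_]; [by [] | by rewrite upd_same] | by rewrite upd_same]. }
  case: (eqVneq (val i) m) => im.
  { have Ei : i = oo m by apply: ord_eq; rewrite im modn_small.
    subst i.
    have qe0 : upd p (inl (oo m)) d (inl (oo 0)) = None by rewrite upd_inl_inl; case: eqP => // E; case: oo_m0; rewrite E.
    apply: (win_step (f := inl (oo 0)) (c := true)).
      apply: legal_local; [exact: qe0 | exact: ns | ].
      move=> v /inc_inl [->|->]; left.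
      * exists (inr true); split; [rewrite /incident /=; arith | by rewrite upd_inl_inr upd_inl_inr].
      * exists (inr false); split; [rewrite /incident /=; arith | by rewrite upd_inl_inr upd_inl_inr].
    move=> nc2; apply: S1_good; split; last split => //.
      move=> f; apply: symat_fixed; [exact: tau_e0 | by [] | move=> _; apply: symat_fixed; [exact: tau_em | by [] | move=> _; exact: sp]].
    move=> f /fixed_even [->|->]; first by rewrite upd_same.
    rewrite upd_inl_inl; case: eqP => [E|_]; [by [] | by rewrite upd_same]. }
  have ti : tauE (inl i) <> inl i.
    by move=> /fixed_even [[E]|[E]]; move: i0 im; rewrite E /=; arith.
  have qj : upd p (inl i) d (tauE (inl i)) = None.
    rewrite upd_other // sp pe //.
  have sq : sym (upd (upd p (inl i) d) (tauE (inl i)) (tdir (inl i) d)).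
    move=> f; apply: symat_mirror => // _ _; exact: sp.
  have ni : forall j : 'I_n, (val j == 0) || (val j == m) ->
      upd (upd p (inl i) d) (tauE (inl i)) (tdir (inl i) d) (inl j) = p (inl j).
    move=> j hj; rewrite /= !upd_inl_inl; case: eqP => [E|_].
      by move: (congr1 val E) hj i0 im => /= ->; arith.
    case: eqP => // E; by move: hj i0 im; rewrite E; arith.
  apply: (win_step (f := tauE (inl i)) (c := tdir (inl i) d)).
    apply: legal_ns => // v.
    exact: (@mirror_ok p (inl i) d v ns ti (fun f _ => sq f)).
  move=> nc2; apply: IH; last split; last split; last split; last split.
  + have h1 := unm_upd d pe; have h2 := @unm_upd (upd p (inl i) d) (tauE (inl i)) (tdir (inl i) d) qj; lia.
  + exact: sq.
  + rewrite ni; [exact: h0 | apply/orP; left; arith].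
  + rewrite ni; [exact: hm0 | apply/orP; right; arith].
  + by rewrite /= !upd_inl_inr.
  + by rewrite /= !upd_inl_inr.
-
  have [s hbq] : exists s, bflow (upd p (inr b) d) s.
    exists (if b then d else ~~ d); rewrite /bflow; case: b {hl ns pe nc1}.
      by left; rewrite upd_same upd_inr_inr /=.
    by right; rewrite upd_same upd_inr_inr /= negbK.
  have csq : forall j, symat (upd p (inr b) d) (inl j).
    move=> j; apply: symat_far => //; exact: sp.
  have q0 : upd p (inr b) d (inl (oo 0)) = None by rewrite upd_inr_inl.
  have qm : upd p (inr b) d (inl (oo m)) = None by rewrite upd_inr_inl.
  case: (classic (forall k : 'I_n, val k != 0 -> k <> oo m ->
           upd p (inr b) d (inl k) = Some (~~ s))) => [All|nAll].
  + apply: (win_step (f := inl (oo 0)) (c := ~~ s)).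
      apply: legal_ns => //; apply: (flow_good (s := s)).
      * move=> k' k0; rewrite upd_inl_inl; case: eqP => [E|_].
          by move: k0; rewrite E /= mod0n.
        case: (eqVneq k' (oo m)) => [->|Nk]; first by left.
        right; apply: All => //; exact/eqP.
      * rewrite upd_inl_inr; case: hbq => [[-> _]|[-> _]]; by [right|left].
      * rewrite upd_inl_inr; case: hbq => [[_ ->]|[_ ->]]; by [left|right].
    move=> _; apply: (@Z_good _ s (oo m)); split; last split; last split; last split.
    * by rewrite upd_same.
    * by rewrite /bflow !upd_inl_inr.
    * arith.
    * rewrite upd_inl_inl; case: eqP => [E|_] //; by case: oo_m0; rewrite E.
    * move=> k' k0 kn; rewrite upd_inl_inl; case: eqP => [E|_].
        by move: k0; rewrite E /= mod0n.
      exact: All.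
  + have [kk [k0 [kj kq]]] := not_all3 nAll.
    case E1 : (upd p (inr b) d (inl (oo m.-1))) => [x|].
    all: apply: (win_step (f := inl (oo m)) (c := odflt s (upd p (inr b) d (inl (oo m.-1))))).
    1,3: apply: em_local => //; rewrite E1 /=; by [left|right].
    all: move=> nc2; apply: (@SY_good _ s); split; last split; last split; last split.
    1,6: move=> j; apply: symat_fixed; [exact: tau_em | by [] | move=> _; exact: csq].
    1,5: rewrite upd_inl_inl; case: eqP => [E|_] //; by case: oo_m0; rewrite E.
    1,4: by rewrite upd_same.
    1,3: by rewrite /bflow !upd_inl_inr.
    all: exists kk; split => //; rewrite upd_inl_inl; case: eqP => [E|_] //.
Qed.

Lemma S0_good (p : position n) : S0 p -> good p.
Proof. exact: (@S0_good_k (unm p)). Qed.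

End Even.

Theorem even_case : ~~ odd n -> player2_wins n.
Proof.
move=> en; have hm : n = n./2 + n./2.
  have := odd_double_half n; rewrite (negbTE en) add0n -addnn => ->. by [].
move=> e d hl; apply: (@S0_good n./2 hm (@empty_pos n)) => //.
split; first exact: sym_empty.
by [].
Qed.

End Game.

Theorem theorem4p5 (n : nat) (hn : 3 <= n) :
  (odd n -> player1_wins n) /\ (~~ odd n -> player2_wins n).
Proof. split; [exact: odd_case | exact: even_case]. Qed.
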